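(* Assume Condition AGCT (see context) holds and that the event $\mathrm{Good}_m$ occurs. Then for every $x\in A^{-1}_{-\infty}$, $$\big\|d(\hat p_n(\cdot\mid T(x)),p(\cdot\mid x))\big\|_{L,k}\le c_{T(x)}+\|\mathrm{conf}(T(x))\|_{L,r}.$$
   Context: Notation. $A$ is a finite alphabet. For $k\ge0$, $A^{-1}_{-k}$ is the set of strings $w=w_{-k}\cdots w_{-1}$ of length $k$ (for $k=0$ the empty string $e$); $A^{-1}_{-\infty}$ is the set of left-infinite sequences $x=\cdots x_{-2}x_{-1}$; $A^*=A^{-1}_{-\infty}\cup\bigcup_{k\ge0}A^{-1}_{-k}$. $|w|$ is the length and $w^{-1}_{-k}=w_{-k}\cdots w_{-1}$ the suffix of length $k$. $w\preceq w'$ ($w'\succeq w$) means $w$ is a suffix of $w'$. For nonempty $w$, $\mathrm{par}(w)=w_{-|w|+1}\cdots w_{-1}$. A tree is a set $\widetilde T\subseteq A^*$ containing $e$ and the parent of each of its nonempty elements; a leaf is an element that is the parent of no element; $\widetilde T$ is complete if every non-leaf node has exactly $|A|$ children. For a tree $\widetilde T$ and $x\in A^{-1}_{-\infty}$, $K_{\widetilde T}(x)=\sup\{k:x^{-1}_{-k}\in\widetilde T\}$ and $\widetilde T(x)=x^{-1}_{-K_{\widetilde T}(x)}$. $\Delta^A$ is the set of probability distributions on $A$. For $v\in\mathbb R^L$, $\|v\|_{L,q}=(\frac1L\sum_\ell|v_\ell|^q)^{1/q}$ ($1\le q<\infty$), $\|v\|_{L,\infty}=\max_\ell|v_\ell|$.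 Model. For $\ell=1,\dots,L$, $X(\ell)$ is a stationary ergodic $A$-valued process with transition probabilities $p_\ell(a\mid x)=\Pr(X_0(\ell)=a\mid X^{-1}_{-\infty}(\ell)=x)$; $p(\cdot\mid x)=(p_\ell(\cdot\mid x))_\ell$, and for $z\in(A^{-1}_{-\infty})^L$, $p(\cdot\mid z)=(p_\ell(\cdot\mid z(\ell)))_\ell$. One observes $X_1^n(\ell)$ for each $\ell$. $N_{j,\ell}(w)$ is the number of occurrences of the finite string $w$ as a consecutive block in $X_1^j(\ell)$ (0 for infinite $w$). If $\min_\ell N_{n-1,\ell}(w)>0$: $\hat p_{n,\ell}(a\mid w)=N_{n,\ell}(wa)/N_{n-1,\ell}(w)$ and $\bar p_{n,\ell}(a\mid w)=\frac{1}{N_{n-1,\ell}(w)}\sum_{i=|w|+1}^{n}\mathbf 1\{X^{i-1}_{i-|w|}(\ell)=w\}p_\ell(a\mid X^{i-1}_{-\infty}(\ell))$; otherwise both equal $1/|A|$. Metrics $d_\ell:\Delta^A\times\Delta^A\to[0,1]$; $d(q,q')=(d_\ell(q_\ell,q'_\ell))_{\ell}$ for families of distributions; $\hat p_n(\cdot|w)=(\hat p_{n,\ell}(\cdot|w))_\ell$, similarly $\bar p_n$. Confidence radii $\mathrm{conf}(w)=(\mathrm{conf}_\ell(w))_{\ell=1}^L$, $w\in A^*$. Approximation error: $c_w=\sup\{\|d(p(\cdot\mid z),\bar p_n(\cdot\mid w))\|_{L,k}:z\in(A^{-1}_{-\infty})^L,\ z(\ell)\succeq w\ \forall\ell\}$.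 The oracle tree $T$ is a minimizer over finite complete trees $\widetilde T$ of $\sup_{x\in A^{-1}_{-\infty}}\big(c_{\widetilde T(x)}+\|\mathrm{conf}(\widetilde T(x))\|_{L,r}\big)$. Event $\mathrm{Good}_m$: for all $w\in A^*$ with $\min_\ell N_{n-1,\ell}(w)>0$, $\|(d_\ell(\bar p_{n,\ell}(\cdot|w),\hat p_{n,\ell}(\cdot|w))/\mathrm{conf}_\ell(w))_\ell\|_{L,m}\le1$. Condition AGCT: the setting holds with $0\le\mathrm{conf}_\ell(w)\le1$, $\mathrm{conf}_\ell(w)\le\mathrm{conf}_\ell(w')$ whenever $w\preceq w'$, and positive extended integers $k,r,m$ with either ($k\le m$, $r\ge km/(m-k)$) or $k\le r=m=\infty$. *)

(* Defs.v *)
From mathcomp Require Import all_boot all_order all_algebra.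
From mathcomp Require Import all_classical all_reals all_analysis.
Set Implicit Arguments. Unset Strict Implicit. Unset Printing Implicit Defensive.
Import Order.TTheory GRing.Theory Num.Theory.
Local Open Scope ring_scope.
Local Open Scope classical_set_scope.

Inductive ext := EFin of nat | EInf.

Definition ext_pos (q : ext) : bool :=
  match q with EFin q => (0 < q)%N | EInf => true end.

Definition ext_le (a b : ext) : bool :=
  match a, b with
  | EFin a, EFin b => (a <= b)%N
  | _, EInf => true
  | EInf, EFin _ => false
  end.

(* "r >= k m / (m - k)" (used only when k <= m), with the conventions
   km/0 = oo (k = m finite), km/(m-k) = k when m = oo and k finite,
   and oo when k = m = oo. *)
Definition ext_ge_ratio (r k m : ext) : bool :=
  match k, m, r with
  | EFin _, EFin _, EInf => true
  | EFin k, EFin m, EFin r => (k * m <= r * (m - k))%N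
  | EFin _, EInf, EInf => true
  | EFin k, EInf, EFin r => (k <= r)%N
  | EInf, _, EInf => true
  | EInf, _, EFin _ => false
  end.

Definition AGCT_exponents (k r m : ext) : Prop :=
  [/\ ext_pos k, ext_pos r & ext_pos m] /\
  ((ext_le k m /\ ext_ge_ratio r k m) \/ (ext_le k r /\ r = EInf /\ m = EInf)).

Definition lnorm (R : realType) (L : nat) (q : ext) (v : 'I_L -> R) : R :=
  match q with
  | EFin q => powR ((L%:R)^-1 * \sum_(l < L) `|v l| ^+ q) (q%:R^-1)
  | EInf => \big[Num.max/0]_(l < L) `|v l|
  end.

(* A finite string w = w_{-k} ... w_{-1} is represented by the
   reversed list [:: w_{-1}; w_{-2}; ...; w_{-k}];  a left-infinite sequence
   x = ... x_{-2} x_{-1} by the function t |-> x_{-(t+1)}.  Thus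
   x^{-1}_{-k} = mkseq x k, w is a suffix of w' iff prefix w w', the string
   "w a" is a :: w, and par(w) drops the last list element. *)
Definition par (A : Type) (w : seq A) : seq A := take (size w).-1 w.

(* the block X_{i-len+1} ... X_i of a path X : int -> A (reversed repr.) *)
Definition block (A : Type) (X : int -> A) (i : int) (len : nat) : seq A :=
  mkseq (fun t => X (i - t%:Z)) len.

Definition past (A : Type) (X : int -> A) (i : int) : nat -> A :=
  fun t => X (i - 1 - t%:Z).

Section Model.
Variables (R : realType) (A : finType) (L : nat).

Definition is_dist (q : A -> R) : Prop :=
  (forall a, 0 <= q a) /\ \sum_(a : A) q a = 1.

Definition is_metric01 (dl : (A -> R) -> (A -> R) -> R) : Prop :=
  forall q q' q'', is_dist q -> is_dist q' -> is_dist q'' ->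
  [/\ 0 <= dl q q' <= 1, dl q q' = 0 <-> (forall a, q a = q' a),
      dl q q' = dl q' q & dl q q'' <= dl q q' + dl q' q''].

(* N_j(w) for the path X (observations X_1 ... X_j):
   number of i with |w| <= i <= j and X_{i-|w|+1}^i = w  (N_j(e) = j+1). *)
Definition Ncount (X : int -> A) (j : nat) (w : seq A) : nat :=
  (\sum_(size w <= i < j.+1) nat_of_bool (block X i%:Z (size w) == w))%N.

Variables (X : 'I_L -> int -> A) (p : 'I_L -> (nat -> A) -> A -> R) (n : nat).

Definition enough (w : seq A) : bool :=
  [forall l : 'I_L, (0 < Ncount (X l) n.-1 w)%N].

Definition phat (l : 'I_L) (w : seq A) : A -> R := fun a =>
  if enough w then (Ncount (X l) n (a :: w))%:R / (Ncount (X l) n.-1 w)%:R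
  else #|A|%:R^-1.

Definition pbar (l : 'I_L) (w : seq A) : A -> R := fun a =>
  if enough w then
    (Ncount (X l) n.-1 w)%:R^-1 *
    \sum_((size w).+1 <= i < n.+1)
       ((block (X l) (i%:Z - 1) (size w) == w)%:R * p l (past (X l) i%:Z) a)
  else #|A|%:R^-1.

Variables (d : 'I_L -> (A -> R) -> (A -> R) -> R) (conf : 'I_L -> seq A -> R).

Definition cw (k : ext) (w : seq A) : R :=
  sup [set lnorm k (fun l => d l (p l (z l)) (pbar l w))
      | z in [set z : 'I_L -> nat -> A | forall l, mkseq (z l) (size w) = w]].

Definition is_tree (T : seq (seq A)) : Prop :=
  [::] \in T /\ (forall w, w \in T -> w != [::] -> par w \in T).

Definition children (T : seq (seq A)) (w : seq A) : seq (seq A) :=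
  undup [seq w' <- T | (w' != [::]) && (par w' == w)].

Definition is_leaf (T : seq (seq A)) (w : seq A) : Prop := children T w = [::].

Definition complete (T : seq (seq A)) : Prop :=
  forall w, w \in T -> ~ is_leaf T w -> size (children T w) = #|A|.

Definition KT (T : seq (seq A)) (x : nat -> A) : nat :=
  (\max_(k < (\max_(w <- T) size w).+1 | mkseq x k \in T) k)%N.

Definition Tx (T : seq (seq A)) (x : nat -> A) : seq A := mkseq x (KT T x).

Definition oracle_objective (k r : ext) (T : seq (seq A)) : R :=
  sup [set cw k (Tx T x) + lnorm r (fun l => conf l (Tx T x))
      | x in [set: nat -> A]].

Definition is_oracle_tree (k r : ext) (T : seq (seq A)) : Prop :=
  [/\ is_tree T, complete T &
      forall T', is_tree T' -> complete T' ->
        oracle_objective k r T <= oracle_objective k r T'].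

(* event Good_m; the ratio d/conf with conf = 0 is read as 0 if d = 0 and
   +oo otherwise (hence the first conjunct). *)
Definition Good (m : ext) : Prop :=
  forall w : seq A, enough w ->
    (forall l, conf l w = 0 -> d l (pbar l w) (phat l w) = 0) /\
    lnorm m (fun l => d l (pbar l w) (phat l w) / conf l w) <= 1.

Definition AGCT (k r m : ext) : Prop :=
  [/\ (forall l w, 0 <= conf l w <= 1),
      (forall l w w', prefix w w' -> conf l w <= conf l w') &
      AGCT_exponents k r m].

End Model.

(* Main.v *)
Require Import Defs.
From mathcomp Require Import all_boot all_order all_algebra.
From mathcomp Require Import all_classical all_reals all_analysis.
From mathcomp Require Import ring lra zify.
Import Order.TTheory GRing.Theory Num.Theory.
Local Open Scope ring_scope.
Set Implicit Arguments. Unset Strict Implicit.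


Section Young.
Variable R : realType.
Implicit Types x y z t : R.

Lemma Y1 z t : 0 <= z -> 0 < t -> t <= 1 -> powR z t <= t * z + (1 - t).
Proof.
move=> z0 t0 t1.
have [->|tn1] := eqVneq t 1.
  by rewrite powRr1 // mul1r subrr addr0.
have tl1 : t < 1 by rewrite lt_neqAle tn1 t1.
have q0 : 0 < (1 - t)^-1 by rewrite invr_gt0 subr_gt0.
have it0 : 0 < t^-1 by rewrite invr_gt0.
have := @conjugate_powR R (powR z t) 1 (t^-1) ((1 - t)^-1) (powR_ge0 _ _) ler01
  it0 q0.
have e : (t^-1)^-1 + ((1 - t)^-1)^-1 = 1 by rewrite !invrK addrC subrK.
move=> /(_ e).
rewrite mulr1 -powRrM mulfV ?gt_eqF // powRr1 // powR1 !invrK.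
by rewrite mulrC mul1r.
Qed.


Lemma powR_pow_nat x (m : nat) t : 0 <= x ->
  powR (x ^+ m) t = powR x (m%:R * t).
Proof. by move=> x0; rewrite powRrM powR_mulrn. Qed.

Lemma Y2 x (k m : nat) : 0 <= x -> (0 < k)%N -> (k <= m)%N ->
  x ^+ k <= (k%:R / m%:R) * x ^+ m + (1 - k%:R / m%:R).
Proof.
move=> x0 k0 km.
have m0 : (0 < m)%N by apply: leq_trans km.
have mR : (0 : R) < m%:R by rewrite ltr0n.
have <- : powR (x ^+ m) (k%:R / m%:R) = x ^+ k.
  by rewrite powR_pow_nat // mulrC divfK ?gt_eqF // powR_mulrn.
apply: Y1; first exact: exprn_ge0.
  by rewrite divr_gt0 // ltr0n.
by rewrite ler_pdivrMr // mul1r ler_nat.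
Qed.

Lemma Y3 x y (k m r : nat) : 0 <= x -> 0 <= y -> (0 < k)%N -> (k < m)%N ->
  (0 < r)%N -> (k * (m + r) <= m * r)%N ->
  x ^+ k * y ^+ k <= (k%:R / m%:R) * x ^+ m + (k%:R / r%:R) * y ^+ r
     + (1 - k%:R / m%:R - k%:R / r%:R).
Proof.
move=> x0 y0 k0 km r0 H.
have m0 : (0 < m)%N by apply: leq_trans km.
have mR : (0 : R) < m%:R by rewrite ltr0n.
have rR : (0 : R) < r%:R by rewrite ltr0n.
have kR : (0 : R) < k%:R by rewrite ltr0n.
set a := k%:R / m%:R.
have a0 : 0 < a by rewrite divr_gt0.
have a1 : a < 1 by rewrite ltr_pdivrMr // mul1r ltr_nat.
set q := (1 - a)^-1.
have q0 : 0 < q by rewrite invr_gt0 subr_gt0.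
have ia0 : 0 < a^-1 by rewrite invr_gt0.
have e : a^-1^-1 + q^-1 = 1 by rewrite !invrK addrC subrK.
have := @conjugate_powR R (x ^+ k) (y ^+ k) (a^-1) q (exprn_ge0 _ x0)
  (exprn_ge0 _ y0) ia0 q0 e.
have -> : powR (x ^+ k) a^-1 = x ^+ m.
  rewrite powR_pow_nat // /a invf_div mulrC divfK ?gt_eqF //.
  by rewrite powR_mulrn.
set t := k%:R * q / r%:R.
have t0 : 0 < t by rewrite /t divr_gt0 // mulr_gt0.
have HR : (k%:R * (m%:R + r%:R) <= m%:R * r%:R :> R).
  by rewrite -natrD -!natrM ler_nat.
have key : k%:R <= r%:R * (1 - a).
  rewrite -subr_ge0.
  have -> : r%:R * (1 - a) - k%:R = (m%:R * r%:R - k%:R * (m%:R + r%:R)) / m%:R.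
    by rewrite /a; field; rewrite gt_eqF.
  by rewrite divr_ge0 ?subr_ge0 // ltW.
have t1 : t <= 1.
  rewrite /t ler_pdivrMr // mul1r /q ler_pdivrMr // subr_gt0 //.
have -> : powR (y ^+ k) q = powR (y ^+ r) t.
  rewrite !powR_pow_nat // /t; congr (powR y _); field; by rewrite gt_eqF.
have := @Y1 (y ^+ r) t (exprn_ge0 r y0) t0 t1.
move=> Hy Hc; apply: (le_trans Hc).
rewrite /q !invrK.
have E : (t * y ^+ r + (1 - t)) * (1 - a) = k%:R / r%:R * y ^+ r + (1 - a - k%:R / r%:R).
  rewrite /t /q; field.
  by rewrite !gt_eqF // subr_gt0.
rewrite -addrA -E (mulrC (x ^+ m)) lerD2l.
by rewrite ler_wpM2r // subr_ge0 ltW.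
Qed.

Lemma convX (k : nat) t a b : (0 < k)%N -> 0 <= t -> t <= 1 -> 0 <= a -> 0 <= b ->
  (t * a + (1 - t) * b) ^+ k <= t * a ^+ k + (1 - t) * b ^+ k.
Proof.
move=> k0 t0 t1 a0 b0.
have k1 : (1 : R) <= k%:R by rewrite ler1n.
have Da : a \in (`[0, +oo[%classic : set R) by rewrite inE /= in_itv /= andbT.
have Db : b \in (`[0, +oo[%classic : set R) by rewrite inE /= in_itv /= andbT.
have := @convex_powR R _ k1 (Itv01 t0 t1) a b Da Db.
rewrite !convRE /= !powR_mulrn //.
  by rewrite addr_ge0 // mulr_ge0 // subr_ge0.
Qed.
End Young.


Section Norms.
Variable R : realType.
Variable L : nat.
Hypothesis L0 : (0 < L)%N.
Implicit Types u v w : 'I_L -> R.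

Definition Snorm (q : nat) v := L%:R^-1 * \sum_(l < L) `|v l| ^+ q.

Lemma LR : (0 : R) < L%:R. Proof. by rewrite ltr0n. Qed.

Lemma S_ge0 q v : 0 <= Snorm q v.
Proof. by rewrite /Snorm mulr_ge0 ?invr_ge0 ?ler0n // sumr_ge0 // => l _; rewrite exprn_ge0. Qed.

Lemma lnorm_ge0 q v : 0 <= lnorm q v.
Proof.
case: q => [q|] /=; first exact: powR_ge0.
by apply: (big_ind (fun x : R => 0 <= x)) => // x y x0 y0; rewrite le_max x0.
Qed.

Lemma lnorm_pow q v : (0 < q)%N -> lnorm (Defs.EFin q) v ^+ q = Snorm q v.
Proof.
move=> q0; rewrite /= -powR_mulrn ?powR_ge0 // -powRrM mulVf ?powRr1 ?S_ge0 //.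
by rewrite pnatr_eq0 -lt0n.
Qed.

Lemma lnorm_le q v N : (0 < q)%N -> 0 <= N -> Snorm q v <= N ^+ q -> lnorm (Defs.EFin q) v <= N.
Proof.
move=> q0 N0 H /=.
rewrite -/(Snorm q v) (le_trans (ge0_ler_powR _ _ _ H)) ?invr_ge0 ?ler0n ?nnegrE ?S_ge0 ?exprn_ge0 //.
rewrite -powR_mulrn // -powRrM mulfV ?powRr1 //.
by rewrite pnatr_eq0 -lt0n.
Qed.

Lemma lnorm_leP q v N : (0 < q)%N -> lnorm (Defs.EFin q) v <= N -> Snorm q v <= N ^+ q.
Proof.
move=> q0 H; rewrite -lnorm_pow //; apply: lerXn2r => //; rewrite ?nnegrE ?lnorm_ge0 //.
exact: le_trans (lnorm_ge0 _ _) H.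
Qed.

Lemma S_eq0 q v : (0 < q)%N -> Snorm q v = 0 -> forall l, v l = 0.
Proof.
move=> q0 /eqP; rewrite /Snorm mulf_eq0 invr_eq0 pnatr_eq0 => /orP [|/eqP H l]; first by move=> /eqP E; exfalso; move: L0; rewrite E.
have H0 := H.
have := psumr_eq0P (fun l _ => exprn_ge0 q (normr_ge0 (v l))) H (i:=l) isT.
by move/eqP; rewrite expf_eq0 q0 normr_eq0 => /eqP.
Qed.

Lemma lnorm_eq0 q v : (0 < q)%N -> lnorm (Defs.EFin q) v = 0 -> forall l, v l = 0.
Proof.
by move=> q0 H; apply: (@S_eq0 q v q0); rewrite -lnorm_pow // H expr0n; move: q0; case: (q) => //.
Qed.

Lemma Mle v N : 0 <= N -> (forall l, `|v l| <= N) -> lnorm EInf v <= N.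
Proof. by move=> N0 H /=; apply: (big_ind (fun x : R => x <= N)) => // x y x0 y0; rewrite ge_max x0. Qed.

Lemma leM v l : `|v l| <= lnorm EInf v.
Proof. by rewrite /= (bigD1 l) //= le_max lexx. Qed.

Lemma S_avg q p v u a b : 0 <= a ->
  (forall l, `|v l| ^+ q <= a * `|u l| ^+ p + b) -> Snorm q v <= a * Snorm p u + b.
Proof.
move=> a0 H; rewrite /S.
have -> : b = L%:R^-1 * \sum_(l < L) b.
  by rewrite sumr_const card_ord -[b *+ L]mulr_natl mulrA mulVf ?mul1r // pnatr_eq0 -lt0n L0.
rewrite mulrA (mulrC a) -mulrA -mulrDr ler_wpM2l ?invr_ge0 ?ler0n //.
rewrite mulr_sumr -big_split /=; exact: ler_sum.
Qed.

Lemma S_avg2 q p1 p2 v u1 u2 a1 a2 b : 0 <= a1 -> 0 <= a2 ->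
  (forall l, `|v l| ^+ q <= a1 * `|u1 l| ^+ p1 + a2 * `|u2 l| ^+ p2 + b) ->
  Snorm q v <= a1 * Snorm p1 u1 + a2 * Snorm p2 u2 + b.
Proof.
move=> a0 a20 H; rewrite /S.
have -> : b = L%:R^-1 * \sum_(l < L) b.
  by rewrite sumr_const card_ord -[b *+ L]mulr_natl mulrA mulVf ?mul1r // pnatr_eq0 -lt0n L0.
rewrite !mulrA (mulrC a1) (mulrC a2) -!mulrA -!mulrDr ler_wpM2l ?invr_ge0 ?ler0n //.
rewrite !mulr_sumr -!big_split /=; exact: ler_sum.
Qed.

End Norms.


Section Mink.
Variable R : realType.
Variable L : nat.
Hypothesis L0 : (0 < L)%N.
Implicit Types u v w : 'I_L -> R.

Lemma mink q u v w : (0 < q)%N -> (forall l, 0 <= u l) -> (forall l, 0 <= v l) ->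
  (forall l, 0 <= w l) -> (forall l, w l <= u l + v l) ->
  lnorm (Defs.EFin q) w <= lnorm (Defs.EFin q) u + lnorm (Defs.EFin q) v.
Proof.
move=> q0 u0 v0 w0 wuv.
set U := lnorm _ u; set V := lnorm _ v.
have U0 : 0 <= U := lnorm_ge0 _ _.
have V0 : 0 <= V := lnorm_ge0 _ _.
apply: lnorm_le => //; first exact: addr_ge0.
have [Ue|Unz] := eqVneq U 0.
  have uz := lnorm_eq0 L0 q0 Ue.
  rewrite Ue add0r /V (lnorm_pow _ q0).
  rewrite -[Snorm q v]addr0 -[Snorm q v]mul1r; apply: S_avg => // l.
  rewrite mul1r addr0 lerXn2r ?nnegrE ?normr_ge0 // !ger0_norm //.
  by have := wuv l; rewrite uz add0r.
have [Ve|Vnz] := eqVneq V 0.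
  have vz := lnorm_eq0 L0 q0 Ve.
  rewrite Ve addr0 /U (lnorm_pow _ q0).
  rewrite -[Snorm q u]addr0 -[Snorm q u]mul1r; apply: S_avg => // l.
  rewrite mul1r addr0 lerXn2r ?nnegrE ?normr_ge0 // !ger0_norm //.
  by have := wuv l; rewrite vz addr0.
have Up : 0 < U by rewrite lt_neqAle eq_sym Unz.
have Vp : 0 < V by rewrite lt_neqAle eq_sym Vnz.
have UVp : 0 < U + V by rewrite addr_gt0.
set t := U / (U + V).
have t0 : 0 <= t by rewrite divr_ge0 // ltW.
have t1 : t <= 1 by rewrite ler_pdivrMr // mul1r lerDl.
set a1 := (U + V) ^+ q * t / U ^+ q.
set a2 := (U + V) ^+ q * (1 - t) / V ^+ q.
have a10 : 0 <= a1 by apply: divr_ge0; [apply: mulr_ge0; [apply: exprn_ge0; exact: ltW|by []]|apply: exprn_ge0].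

have a20 : 0 <= a2 by apply: divr_ge0; [apply: mulr_ge0; [apply: exprn_ge0; exact: ltW|by rewrite subr_ge0]|apply: exprn_ge0].

have H : Snorm q w <= a1 * Snorm q u + a2 * Snorm q v + 0.
  apply: S_avg2 => // l.
  rewrite !ger0_norm // addr0.
  have E : u l + v l = (U + V) * (t * (u l / U) + (1 - t) * (v l / V)).
    rewrite /t; field; rewrite !gt_eqF //.
  apply: (le_trans (lerXn2r _ _ _ (wuv l))); rewrite ?nnegrE ?addr_ge0 //.
  rewrite E exprMn.
  apply: le_trans (ler_wpM2l (exprn_ge0 _ (ltW UVp))
     (convX q0 t0 t1 (divr_ge0 (u0 l) (ltW Up)) (divr_ge0 (v0 l) (ltW Vp)))) _.
  rewrite /a1 /a2 !expr_div_n; rewrite le_eqVlt; apply/orP; left; apply/eqP; field.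
  by rewrite !expf_neq0 // gt_eqF.
apply: (le_trans H); rewrite -!(lnorm_pow _ q0) -/U -/V addr0 /a1 /a2 /t.
rewrite le_eqVlt; apply/orP; left; apply/eqP; field.
by rewrite !expf_neq0 // gt_eqF.
Qed.

End Mink.


Section Hold.
Variable R : realType.
Variable L : nat.
Hypothesis L0 : (0 < L)%N.
Implicit Types u v w b c : 'I_L -> R.

Lemma lnorm_zero q v : ext_pos q -> (forall l, v l = 0) -> lnorm q v <= 0.
Proof.
case: q => [q|] /= q0 vz.
  apply: lnorm_le => //; rewrite expr0n; case: q q0 => // q _ /=.
  apply: (le_trans (@S_avg _ _ L0 q.+1 q.+1 v v 0 0 (lexx 0) _)); first by move=> l; rewrite vz normr0 expr0n mul0r addr0.
  by rewrite mul0r addr0.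
by apply: Mle => // l; rewrite vz normr0.
Qed.

Lemma minkI u v w : (forall l, 0 <= u l) -> (forall l, 0 <= v l) ->
  (forall l, 0 <= w l) -> (forall l, w l <= u l + v l) ->
  lnorm EInf w <= lnorm EInf u + lnorm EInf v.
Proof.
move=> u0 v0 w0 wuv; apply: Mle; first by rewrite addr_ge0 ?lnorm_ge0.
move=> l; rewrite ger0_norm //; apply: (le_trans (wuv l)).
apply: lerD; [have := leM u l|have := leM v l]; by rewrite ger0_norm.
Qed.

Lemma minkG k u v w : ext_pos k -> (forall l, 0 <= u l) -> (forall l, 0 <= v l) ->
  (forall l, 0 <= w l) -> (forall l, w l <= u l + v l) ->
  lnorm k w <= lnorm k u + lnorm k v.
Proof.
case: k => [k|] /= k0; first exact: mink.
exact: minkI.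
Qed.


Lemma hold_FFF b c (k m r : nat) : (0 < k)%N -> (k < m)%N -> (0 < r)%N ->
  (k * (m + r) <= m * r)%N ->
  (forall l, 0 <= b l) -> (forall l, 0 <= c l) -> lnorm (Defs.EFin m) b <= 1 ->
  lnorm (Defs.EFin k) (fun l => b l * c l) <= lnorm (Defs.EFin r) c.
Proof.
move=> k0 km r0 H b0 c0 bm.
have m0 : (0 < m)%N by apply: leq_trans km.
set C := lnorm _ c.
have [Ce|Cnz] := eqVneq C 0.
  have cz := lnorm_eq0 L0 r0 Ce.
  by rewrite Ce; apply: lnorm_zero => // l; rewrite cz mulr0.
have Cp : 0 < C by rewrite lt_neqAle eq_sym Cnz lnorm_ge0.
apply: lnorm_le => //; first exact: ltW.
set al := k%:R / m%:R : R; set be := k%:R / r%:R : R.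
have al0 : 0 <= al by rewrite divr_ge0 ?ler0n.
have be0 : 0 <= be by rewrite divr_ge0 ?ler0n.
have Sb : Snorm m b <= 1 by have := lnorm_leP m0 bm; rewrite expr1n.
have Sc : Snorm r c = C ^+ r by rewrite -lnorm_pow.
have := @S_avg2 _ _ L0 k m r (fun l => b l * c l) b c (C ^+ k * al)
  (C ^+ k * be / C ^+ r) (C ^+ k * (1 - al - be)).
move=> /(_ (mulr_ge0 (exprn_ge0 _ (ltW Cp)) al0)).
move=> /(_ (divr_ge0 (mulr_ge0 (exprn_ge0 _ (ltW Cp)) be0) (exprn_ge0 _ (ltW Cp)))).
have pw : forall l, `|b l * c l| ^+ k <= C ^+ k * al * `|b l| ^+ m +
    C ^+ k * be / C ^+ r * `|c l| ^+ r + C ^+ k * (1 - al - be).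
  move=> l; rewrite !ger0_norm ?mulr_ge0 //.
  have cE : c l = C * (c l / C) by rewrite mulrC divfK ?gt_eqF.
  have c'0 : 0 <= c l / C by rewrite divr_ge0 // ltW.
  rewrite [in X in X <= _]cE mulrCA exprMn.
  have := Y3 (b0 l) c'0 k0 km r0 H; rewrite -/al -/be.
  move=> /(ler_wpM2l (exprn_ge0 k (ltW Cp))) Hl.
  rewrite exprMn; apply: (le_trans Hl).
  rewrite le_eqVlt; apply/orP; left; apply/eqP; rewrite expr_div_n; field.
  by rewrite expf_neq0 // gt_eqF.
move=> /(_ pw) Hs; apply: (le_trans Hs); rewrite Sc.
rewrite divfK ?expf_neq0 ?gt_eqF //.
apply: (@le_trans _ _ (C ^+ k * al * 1 + C ^+ k * be + C ^+ k * (1 - al - be))).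
  by rewrite lerD2r lerD2r ler_wpM2l // mulr_ge0 // exprn_ge0 // ltW.
have -> : C ^+ k * al * 1 + C ^+ k * be + C ^+ k * (1 - al - be) = C ^+ k by ring.
exact: lexx.
Qed.


Lemma hold_FFI b c (k m : nat) : (0 < k)%N -> (k <= m)%N ->
  (forall l, 0 <= b l) -> (forall l, 0 <= c l) -> lnorm (Defs.EFin m) b <= 1 ->
  lnorm (Defs.EFin k) (fun l => b l * c l) <= lnorm EInf c.
Proof.
move=> k0 km b0 c0 bm.
have m0 : (0 < m)%N by apply: leq_trans km.
set M := lnorm EInf c.
have M0 : 0 <= M by apply: lnorm_ge0.
have cM : forall l, c l <= M by move=> l; have := leM c l; rewrite ger0_norm.
apply: lnorm_le => //.
set al := k%:R / m%:R : R.
have al0 : 0 <= al by rewrite divr_ge0 ?ler0n.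
have Sb : Snorm m b <= 1 by have := lnorm_leP m0 bm; rewrite expr1n.
have := @S_avg _ _ L0 k m (fun l => b l * c l) b (M ^+ k * al) (M ^+ k * (1 - al)).
move=> /(_ (mulr_ge0 (exprn_ge0 _ M0) al0)).
have pw : forall l, `|b l * c l| ^+ k <= M ^+ k * al * `|b l| ^+ m + M ^+ k * (1 - al).
  move=> l; rewrite !ger0_norm ?mulr_ge0 // exprMn.
  have := Y2 (b0 l) k0 km; rewrite -/al.
  move=> /(ler_wpM2l (exprn_ge0 k M0)) Hl.
  apply: le_trans (_ : M ^+ k * b l ^+ k <= _).
    rewrite mulrC ler_wpM2r ?exprn_ge0 //.
    by apply: lerXn2r; rewrite ?nnegrE.
  apply: (le_trans Hl).
  by rewrite le_eqVlt; apply/orP; left; apply/eqP; ring.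
move=> /(_ pw) Hs; apply: (le_trans Hs).
apply: (@le_trans _ _ (M ^+ k * al * 1 + M ^+ k * (1 - al))).
  by rewrite lerD2r ler_wpM2l // mulr_ge0 // exprn_ge0.
have -> : M ^+ k * al * 1 + M ^+ k * (1 - al) = M ^+ k by ring.
exact: lexx.
Qed.

Lemma hold_FIF b c (k r : nat) : (0 < k)%N -> (k <= r)%N ->
  (forall l, 0 <= b l) -> (forall l, 0 <= c l) -> lnorm EInf b <= 1 ->
  lnorm (Defs.EFin k) (fun l => b l * c l) <= lnorm (Defs.EFin r) c.
Proof.
move=> k0 kr b0 c0 bm.
have r0 : (0 < r)%N by apply: leq_trans kr.
have b1 : forall l, b l <= 1.
  by move=> l; have := leM b l; rewrite ger0_norm // => /le_trans; apply.
set C := lnorm _ c.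
have [Ce|Cnz] := eqVneq C 0.
  have cz := lnorm_eq0 L0 r0 Ce.
  by rewrite Ce; apply: lnorm_zero => // l; rewrite cz mulr0.
have Cp : 0 < C by rewrite lt_neqAle eq_sym Cnz lnorm_ge0.
apply: lnorm_le => //; first exact: ltW.
set be := k%:R / r%:R : R.
have be0 : 0 <= be by rewrite divr_ge0 ?ler0n.
have Sc : Snorm r c = C ^+ r by rewrite -lnorm_pow.
have := @S_avg _ _ L0 k r (fun l => b l * c l) c (C ^+ k * be / C ^+ r) (C ^+ k * (1 - be)).
move=> /(_ (divr_ge0 (mulr_ge0 (exprn_ge0 _ (ltW Cp)) be0) (exprn_ge0 _ (ltW Cp)))).
have pw : forall l, `|b l * c l| ^+ k <= C ^+ k * be / C ^+ r * `|c l| ^+ r + C ^+ k * (1 - be).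
  move=> l; rewrite !ger0_norm ?mulr_ge0 //.
  have cE : c l = C * (c l / C) by rewrite mulrC divfK ?gt_eqF.
  have c'0 : 0 <= c l / C by rewrite divr_ge0 // ltW.
  apply: le_trans (_ : c l ^+ k <= _).
    apply: lerXn2r; rewrite ?nnegrE ?mulr_ge0 //.
    by rewrite -[X in _ <= X]mul1r ler_wpM2r.
  rewrite [in X in X <= _]cE exprMn.
  have := Y2 c'0 k0 kr; rewrite -/be.
  move=> /(ler_wpM2l (exprn_ge0 k (ltW Cp))) Hl; apply: (le_trans Hl).
  rewrite le_eqVlt; apply/orP; left; apply/eqP; rewrite expr_div_n; field.
  by rewrite expf_neq0 // gt_eqF.
move=> /(_ pw) Hs; apply: (le_trans Hs); rewrite Sc.
rewrite divfK ?expf_neq0 ?gt_eqF //.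
have -> : C ^+ k * be + C ^+ k * (1 - be) = C ^+ k by ring.
exact: lexx.
Qed.

Lemma hold_FII b c (k : nat) : (0 < k)%N ->
  (forall l, 0 <= b l) -> (forall l, 0 <= c l) -> lnorm EInf b <= 1 ->
  lnorm (Defs.EFin k) (fun l => b l * c l) <= lnorm EInf c.
Proof.
move=> k0 b0 c0 bm.
have b1 : forall l, b l <= 1.
  by move=> l; have := leM b l; rewrite ger0_norm // => /le_trans; apply.
set M := lnorm EInf c.
have M0 : 0 <= M by apply: lnorm_ge0.
have cM : forall l, c l <= M by move=> l; have := leM c l; rewrite ger0_norm.
apply: lnorm_le => //.
have := @S_avg _ _ L0 k k (fun l => b l * c l) c 0 (M ^+ k) (lexx 0).
have pw : forall l, `|b l * c l| ^+ k <= 0 * `|c l| ^+ k + M ^+ k.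
  move=> l; rewrite mul0r add0r ger0_norm ?mulr_ge0 //.
  apply: lerXn2r; rewrite ?nnegrE ?mulr_ge0 //.
  by apply: le_trans (cM l); rewrite -[X in _ <= X]mul1r ler_wpM2r.
by move=> /(_ pw); rewrite mul0r add0r.
Qed.

Lemma hold_III b c :
  (forall l, 0 <= b l) -> (forall l, 0 <= c l) -> lnorm EInf b <= 1 ->
  lnorm EInf (fun l => b l * c l) <= lnorm EInf c.
Proof.
move=> b0 c0 bm.
have b1 : forall l, b l <= 1.
  by move=> l; have := leM b l; rewrite ger0_norm // => /le_trans; apply.
apply: Mle; first by apply: lnorm_ge0.
move=> l; rewrite ger0_norm ?mulr_ge0 //.
apply: le_trans (_ : c l <= _); last by have := leM c l; rewrite ger0_norm.
by rewrite -[X in _ <= X]mul1r ler_wpM2r.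
Qed.

Lemma holder b c k r m : AGCT_exponents k r m ->
  (forall l, 0 <= b l) -> (forall l, 0 <= c l) -> lnorm m b <= 1 ->
  lnorm k (fun l => b l * c l) <= lnorm r c.
Proof.
move=> [[kp rp mp] H] b0 c0 bm.
case: k kp H => [k|] kp H; case: r rp H => [r|] rp H; case: m mp H bm => [m|] mp H bm.
- case: H => [[km H]|[_ [//]]].
  rewrite /= in kp rp mp km H.
  have km' : (k < m)%N.
    case: (ltngtP k m) => // e; [lia | subst m; move: H; rewrite subnn muln0; lia].
  have H' : (k * (m + r) <= m * r)%N by nia.
  exact: (@hold_FFF b c k m r kp km' rp H' b0 c0 bm).
- case: H => [[kr H]|[_ [//]]].
  rewrite /= in kp rp H.
  exact: (@hold_FIF b c k r kp H b0 c0 bm).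
- case: H => [[km H]|[_ [//]]].
  rewrite /= in kp km.
  exact: (@hold_FFI b c k m kp km b0 c0 bm).
- exact: (@hold_FII b c k kp b0 c0 bm).
- by case: H => [[]|[_ [//]]].
- by case: H => [[]|[_ [//]]].
- by case: H => [[]|[_ [//]]].
- exact: hold_III.
Qed.

End Hold.


Lemma block_succ (A : Type) (X : int -> A) (i : int) (s : nat) :
  block X i s.+1 = X i :: block X (i - 1) s.
Proof.
rewrite /block /mkseq /= subr0; congr (_ :: _).
rewrite -(addn0 1%N) iotaDl -map_comp; apply: eq_map => t /=.
congr X; rewrite -addn1 PoszD; ring.
Qed.

Section Combi.
Variables (R : realType) (A : finType) (L : nat) (X : 'I_L -> int -> A)
  (p : 'I_L -> (nat -> A) -> A -> R) (n : nat).
Hypothesis n0 : (0 < n)%N.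
Hypothesis pd : forall l x, is_dist (p l x).

Lemma sum_cons_eq (b : bool) (y : A) (w : seq A) (B : seq A) :
  (\sum_(a : A) nat_of_bool (y :: B == a :: w) = nat_of_bool (B == w))%N.
Proof.
rewrite (bigD1 y) //= eqseq_cons eqxx /= big1 ?addn0 // => a ay.
by rewrite eqseq_cons eq_sym (negbTE ay).
Qed.

Lemma reindex (F : nat -> R) (s : nat) :
  \sum_(s.+1 <= i < n.+1) F i = \sum_(s <= i < n.-1.+1) F i.+1.
Proof. by rewrite big_add1 /= prednK. Qed.

Lemma sumN (l : 'I_L) (w : seq A) :
  (\sum_(a : A) Ncount (X l) n (a :: w) = Ncount (X l) n.-1 w)%N.
Proof.
rewrite /Ncount /= exchange_big /=.
rewrite big_add1 /= prednK //.
apply: eq_bigr => i _.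
rewrite block_succ.
have -> : ((i.+1)%:Z - 1 = i%:Z)%R by rewrite -addn1 PoszD addrK.
exact: sum_cons_eq true _ _ _.
Qed.


Hypothesis Ane : (0 < #|A|)%N.

Lemma unif_dist : is_dist (fun _ : A => (#|A|%:R)^-1 : R).
Proof.
split=> [a|]; first by rewrite invr_ge0 ler0n.
rewrite sumr_const cardT -cardE.
have -> : #|A|%:R^-1 *+ #|A| = #|A|%:R^-1 * #|A|%:R :> R by rewrite mulr_natr.
by rewrite mulVf // pnatr_eq0 -lt0n.
Qed.

Lemma phat_dist l w : is_dist (phat R X n l w).
Proof.
rewrite /phat; case en: (enough X n w); last exact: unif_dist.
have N0 : (0 < Ncount (X l) n.-1 w)%N by move/forallP: en; apply.
split=> [a|]; first by rewrite divr_ge0 ?ler0n.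
rewrite -mulr_suml -natr_sum sumN mulfV // pnatr_eq0 -lt0n //.
Qed.

Lemma pbar_dist l w : is_dist (pbar X p n l w).
Proof.
rewrite /pbar; case en: (enough X n w); last exact: unif_dist.
have N0 : (0 < Ncount (X l) n.-1 w)%N by move/forallP: en; apply.
split=> [a|].
  rewrite mulr_ge0 ?invr_ge0 ?ler0n // sumr_ge0 // => i _.
  by rewrite mulr_ge0 ?ler0n //; case: (pd l (past (X l) i%:Z)) => H _.
rewrite -mulr_sumr exchange_big /=.
have -> : \sum_((size w).+1 <= i < n.+1)
    \sum_(a : A) (((block (X l) (i%:Z - 1) (size w) == w)%:R : R) * p l (past (X l) i%:Z) a)
    = (Ncount (X l) n.-1 w)%:R.
  rewrite /Ncount natr_sum big_add1 /= prednK //; apply: eq_bigr => i _.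
  rewrite -mulr_sumr; case: (pd l (past (X l) (i.+1)%:Z)) => _ ->.
  have -> : ((i.+1)%:Z - 1 = i%:Z)%R by rewrite -addn1 PoszD addrK.
  by rewrite mulr1.
by rewrite mulVf // pnatr_eq0 -lt0n.
Qed.

End Combi.


Lemma lnorm_le1 (R : realType) (L : nat) (L0 : (0 < L)%N) q (v : 'I_L -> R) :
  ext_pos q -> (forall l, 0 <= v l <= 1) -> lnorm q v <= 1.
Proof.
case: q => [q|] /= q0 H.
  apply: lnorm_le => //; rewrite expr1n.
  apply: (le_trans (@S_avg _ _ L0 q q v v 0 1 (lexx 0) _)); last by rewrite mul0r add0r.
  move=> l; rewrite mul0r add0r; case/andP: (H l) => h0 h1.
  by rewrite ger0_norm // exprn_ile1.
by apply: Mle => // l; case/andP: (H l) => h0 h1; rewrite ger0_norm.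
Qed.

Unset Implicit Arguments. Set Strict Implicit.

Theorem corollary3p1 (R : realType) (A : finType) (L n : nat)
  (X : 'I_L -> int -> A) (p : 'I_L -> (nat -> A) -> A -> R)
  (d : 'I_L -> (A -> R) -> (A -> R) -> R) (conf : 'I_L -> seq A -> R)
  (k r m : ext) (T : seq (seq A)) :
  (0 < L)%N -> (0 < n)%N ->
  (forall l x, is_dist (p l x)) ->
  (forall l, is_metric01 (d l)) ->
  AGCT conf k r m ->
  is_oracle_tree X p n d conf k r T ->
  Good X p n d conf m ->
  forall x : nat -> A,
    lnorm k (fun l => d l (phat R X n l (Tx T x)) (p l x))
      <= cw X p n d k (Tx T x) + lnorm r (fun l => conf l (Tx T x)).
Proof.
move=> L0 n0 pd dm [conf01 confmono expo] _ good x.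
have Ane : (0 < #|A|)%N by apply/card_gt0P; exists (x 0%N).
have kp : ext_pos k by case: expo => [[]].
set w := Tx T x.
have phd := phat_dist R X n0 Ane.
have pbd := pbar_dist X n0 pd Ane.
set U := fun l => d l (p l x) (pbar X p n l w).
set V := fun l => d l (pbar X p n l w) (phat R X n l w).
have U0 : forall l, 0 <= U l.
  by move=> l; case: (dm l _ _ _ (pd l x) (pbd l w) (pbd l w)) => /andP[].
have V0 : forall l, 0 <= V l.
  by move=> l; case: (dm l _ _ _ (pbd l w) (phd l w) (phd l w)) => /andP[].
have W0 : forall l, 0 <= d l (phat R X n l w) (p l x).
  by move=> l; case: (dm l _ _ _ (phd l w) (pd l x) (pd l x)) => /andP[].
have WUV : forall l, d l (phat R X n l w) (p l x) <= V l + U l.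
  move=> l; case: (dm l _ _ _ (phd l w) (pbd l w) (pd l x)) => _ _ _ tri.
  apply: (le_trans tri); rewrite /V /U.
  case: (dm l _ _ _ (phd l w) (pbd l w) (pd l x)) => _ _ s1 _.
  case: (dm l _ _ _ (pbd l w) (pd l x) (pd l x)) => _ _ s2 _.
  by rewrite s1 s2.
apply: (le_trans (minkG L0 kp V0 U0 W0 WUV)).
rewrite addrC; apply: lerD.
-
  rewrite /cw.
  Local Open Scope classical_set_scope.
  set E := [set _ | _ in _].
  have Ez : E (lnorm k U).
    by exists (fun _ => x) => //= l; rewrite /w /Tx size_mkseq.
  have hub : has_ubound E.
    exists 1 => y [z _ <-]; apply: lnorm_le1 => // l.
    by case: (dm l _ _ _ (pd l (z l)) (pbd l w) (pbd l w)).
  exact: ub_le_sup hub _ Ez.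
-
  case en: (enough X n w).
  + have [cz bm] := good w en.
    set b := fun l => V l / conf l w.
    have -> : V = fun l => b l * conf l w.
      apply/funext => l; rewrite /b.
      have [c0|cn0] := eqVneq (conf l w) 0; last by rewrite divfK.
      by rewrite c0 mulr0; exact: cz.
    apply: (holder L0 expo _ _ bm) => l.
      by apply: divr_ge0; [exact: V0 | case/andP: (conf01 l w)].
    by case/andP: (conf01 l w).
  + apply: (le_trans (lnorm_zero L0 kp _)); last exact: lnorm_ge0.
    move=> l; rewrite /V.
    have := pbd l w; have := phd l w.
    rewrite /phat /pbar en => h1 h2.
    by case: (dm l _ _ _ h1 h1 h1) => _ [_ ->].
Qed.
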